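(* Let $G$ be a finite semi-3-abelian 3-group, let $x\in\Omega_{1}(G)$, let $k\ge 1$ and $g_1,\dots,g_k\in G$. Then for every permutation $\sigma$ of $\{1,\dots,k\}$, $$[x,g_{\sigma(1)},g_{\sigma(2)},\dots,g_{\sigma(k)}]=[x,g_{1},g_{2},\dots,g_{k}]^{2^{\delta(\sigma)}},$$ where $\delta(\sigma)=0$ if $\sigma$ is an even permutation and $\delta(\sigma)=1$ if $\sigma$ is odd.
   Context: A finite 3-group $G$ is semi-3-abelian if for all $a,b\in G$: $(ab)^{3}=1$ if and only if $a^{3}b^{3}=1$. $\Omega_{1}(G)=\langle g\in G : g^{3}=1\rangle$. Commutators: $[x,y]=x^{-1}y^{-1}xy$, and left-normed $[x_1,\dots,x_n]=[[x_1,\dots,x_{n-1}],x_n]$. *)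

(* Defs.v *)
From mathcomp Require Import all_boot all_fingroup all_solvable.
Set Implicit Arguments. Unset Strict Implicit. Unset Printing Implicit Defensive.
Local Open Scope group_scope.

Definition semi3abelian (gT : finGroupType) (G : {set gT}) : Prop :=
  forall a b, a \in G -> b \in G -> ((a * b) ^+ 3 == 1) = (a ^+ 3 * b ^+ 3 == 1).

Definition lcomm (gT : finGroupType) (x : gT) (s : seq gT) : gT :=
  foldl (fun a b => [~ a, b]) x s.

(* Main.v *)
Require Import Defs.
From mathcomp Require Import all_boot all_fingroup all_solvable.
From mathcomp Require Import zify.
Local Open Scope group_scope.
Set Implicit Arguments. Unset Strict Implicit. Unset Printing Implicit Defensive.

Section S.
Variables (gT : finGroupType) (G : {group gT}).
Hypothesis pG : 3.-group G.
Hypothesis sG : semi3abelian G.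
Local Notation N := 'Ohm_1(G).

Lemma N_exp w : w \in N -> w ^+ 3 = 1.
Proof.
rewrite (OhmE 1 pG) expn1.
have gS : group_set 'Ldiv_3(G).
  apply/group_setP; split.
    by apply/LdivP; rewrite group1 expg1n.
  move=> a b /LdivP[aG a3] /LdivP[bG b3]; apply/LdivP; split; first exact: groupM.
  by apply/eqP; rewrite sG // a3 b3 mulg1.
by rewrite (gen_set_id gS) => /LdivP[].
Qed.

Lemma N_G w : w \in N -> w \in G.
Proof. by move/(subsetP (Ohm_sub 1 G)). Qed.

Lemma nNG : G \subset 'N(N).
Proof. exact: gFnorm. Qed.

Lemma NJ w c : w \in N -> c \in G -> w ^ c \in N.
Proof. by move=> wN cG; rewrite memJ_norm // (subsetP nNG). Qed.

Lemma NR w c : w \in N -> c \in G -> [~ w, c] \in N.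
Proof. by move=> wN cG; rewrite commgEl groupM ?groupV ?NJ. Qed.

Lemma cube_mul a w : a \in G -> w \in N -> (a * w) ^+ 3 = a ^+ 3.
Proof.
move=> aG wN.
have h := sG (groupM aG (N_G wN)) (groupVr aG).
have e : a * w * a^-1 = w ^ a^-1 by rewrite conjgE invgK mulgA.
rewrite e -conjXg N_exp // conj1g eqxx in h.
symmetry in h; move/eqP: h => h.
by rewrite -(mulgK (a^-1 ^+ 3) ((a * w) ^+ 3)) h expgVn invgK mul1g.
Qed.


Lemma cube_id (c w : gT) :
  (c * w) ^+ 3 = c ^+ 3 * (w ^ (c ^+ 2) * w ^ c * w).
Proof. by rewrite !conjgE !expgS expg0 !mulg1 !invMg !mulgA !mulgK. Qed.

Lemma C_eq w c : w \in N -> c \in G -> w ^ (c ^+ 2) * w ^ c * w = 1.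
Proof.
move=> wN cG; apply: (@mulgI _ (c ^+ 3)).
by rewrite -cube_id cube_mul // mulg1.
Qed.

Lemma commJ w c : w \in N -> c \in G -> commute w (w ^ c).
Proof.
move=> wN cG.
have h1 := C_eq wN cG.
have h2 := C_eq wN (groupVr cG).
move: h2; set X := w ^ (c^-1 ^+ 2); set Y := w ^ c^-1 => h2.
have : (X * Y * w) ^ (c ^+ 2) = 1 by rewrite h2 conj1g.
rewrite conjMg conjMg /X /Y -!conjgM expgVn mulVg conjg1 {2}expgS expg1 mulKg => h3.
rewrite -mulgA in h1.
have e1 := mulg1_eq h1. have e2 := mulg1_eq h3.
have e : (w * w ^ c)^-1 = (w ^ c * w)^-1.
  by rewrite e2 -e1 invgK.
by move/invg_inj: e.
Qed.

Lemma commRV w c : w \in N -> c \in G -> [~ w^-1, c] = [~ w, c]^-1.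
Proof.
move=> wN cG; rewrite !commgEl invgK invMg invgK conjVg.
exact: (commuteV (commJ wN cG)).
Qed.

Lemma commJJ w c d : w \in N -> c \in G -> d \in G -> commute (w ^ c) (w ^ d).
Proof.
move=> wN cG dG.
have h := commJ wN (groupM dG (groupVr cG)).
have -> : w ^ d = (w ^ (d * c^-1)) ^ c by rewrite -conjgM mulgKV.
rewrite /commute -!conjMg h //.
Qed.

Definition M w := <<w ^: G>>.

Lemma abM w : w \in N -> abelian (M w).
Proof.
move=> wN; rewrite /M abelian_gen.
apply/centsP => u /imsetP[c cG ->] v /imsetP[d dG ->].
exact: commJJ.
Qed.

Lemma wM w : w \in M w.
Proof. by rewrite /M mem_gen // class_refl. Qed.

Lemma nMG w : G \subset 'N(M w).
Proof. exact: subset_trans (class_norm w G) (norm_gen _). Qed.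

Lemma MN w : w \in N -> M w \subset N.
Proof. by move=> wN; rewrite /M gen_subG; apply/subsetP => u /imsetP[c cG ->]; exact: NJ. Qed.

Lemma MJ w t c : t \in M w -> c \in G -> t ^ c \in M w.
Proof. by move=> tM cG; rewrite memJ_norm // (subsetP (nMG w)). Qed.

Lemma MR w t c : t \in M w -> c \in G -> [~ t, c] \in M w.
Proof. by move=> tM cG; rewrite commgEl groupM ?groupV ?MJ. Qed.


Lemma Ecc t c : t \in N -> c \in G -> [~ [~ t, c], c] = 1.
Proof.
move=> tN cG.
have h1 := C_eq tN cG. rewrite -mulgA in h1.
have e1 : t ^ (c ^+ 2) = t^-1 * (t ^ c)^-1.
  by rewrite -invMg -(mulg1_eq h1) invgK.
have ct := commuteV (commJ tN cG).
have u3 : (t ^ c) ^+ 3 = 1 by rewrite -conjXg N_exp // conj1g.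
rewrite !commgEl invMg invgK conjMg conjVg -conjgM -(expg1 c) -expgD /=.
rewrite expg1 e1 !mulgA -(mulgA _ t) ct !mulgA mulgK.
have -> : (t ^ c)^-1 * (t ^ c)^-1 * (t ^ c)^-1 = ((t ^ c) ^+ 3)^-1.
  by rewrite !expgS expg0 mulg1 !invMg mulgA.
by rewrite u3 invg1.
Qed.


Lemma Prod (t c d : gT) : [~ t, c * d] = [~ t, d] * [~ t, c] * [~ [~ t, c], d].
Proof. by rewrite commgMJ conjg_mulR mulgA. Qed.

Lemma Step1 t a b : t \in N -> a \in G -> b \in G ->
  [~ [~ [~ t, a], b], a] = 1.
Proof.
move=> tN aG bG.
have pN := NR tN aG. have rN := NR pN bG.
have h := Ecc pN (groupM aG bG).
rewrite (Prod [~ t, a] a b) (Ecc tN aG) mulg1 comm1g mulg1 in h.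
rewrite Prod (Ecc pN bG) mul1g -conjg_mulR in h.
by apply/eqP; rewrite -(conjg_eq1 _ b) h.
Qed.

Lemma Add w t1 t2 c : w \in N -> t1 \in M w -> t2 \in M w -> c \in G ->
  [~ t1 * t2, c] = [~ t1, c] * [~ t2, c].
Proof.
move=> wN h1 h2 cG; rewrite commMgJ.
have hc : commute [~ t1, c] t2 := centsP (abM wN) _ (MR h1 cG) _ h2.
by rewrite conjgE hc mulKg.
Qed.

Lemma Step2 t a b : t \in N -> a \in G -> b \in G ->
  [~ [~ t, a], b] * [~ [~ t, b], a] = 1.
Proof.
move=> tN aG bG.
have tM := wM t.
have pM := MR tM aG. have qM := MR tM bG. have rM := MR pM bG.
have pN := NR tN aG. have qN := NR tN bG. have rN := NR pN bG.
have h := Ecc tN (groupM aG bG).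
rewrite Prod Prod (Add tN (groupM qM pM) rM bG) (Add tN qM pM bG) in h.
rewrite (Ecc tN bG) mul1g (Ecc pN bG) mulg1 in h.
rewrite (Add tN (groupM qM pM) rM aG) (Add tN qM pM aG) (Ecc tN aG) mulg1 in h.
rewrite (Step1 tN aG bG) mulg1 (Step1 tN bG aG) mulg1 in h.
exact: h.
Qed.


Lemma swapc t a b : t \in N -> a \in G -> b \in G ->
  [~ [~ t, a], b] = [~ [~ t, b], a]^-1.
Proof. by move=> tN aG bG; rewrite -(mulg1_eq (Step2 tN aG bG)) invgK. Qed.

Lemma lcommN w s : w \in N -> {subset s <= G} -> lcomm w s \in N.
Proof.
elim: s w => [|c s IH] w wN sG' //=.
apply: IH; first by apply: NR => //; apply: sG'; rewrite inE eqxx.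
by move=> z zs; apply: sG'; rewrite inE zs orbT.
Qed.

Lemma lcommV w s : w \in N -> {subset s <= G} -> lcomm w^-1 s = (lcomm w s)^-1.
Proof.
elim: s w => [|c s IH] w wN sG' //=.
have cG : c \in G by apply: sG'; rewrite inE eqxx.
rewrite commRV // IH //; first exact: NR.
by move=> z zs; apply: sG'; rewrite inE zs orbT.
Qed.

Definition pw (b : bool) (z : gT) := if b then z^-1 else z.

Lemma pwN b z : pw (~~ b) z = (pw b z)^-1.
Proof. by case: b; rewrite /pw ?invgK. Qed.

Lemma pwV b z : pw b z^-1 = (pw b z)^-1.
Proof. by case: b. Qed.

Lemma pwK b z : pw b (pw b z) = z.
Proof. by case: b; rewrite /pw ?invgK. Qed.

Lemma swap_adj w u a b v : w \in N -> {subset u <= G} -> a \in G -> b \in G ->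
  {subset v <= G} ->
  lcomm w (u ++ a :: b :: v) = (lcomm w (u ++ b :: a :: v))^-1.
Proof.
move=> wN uG aG bG vG; rewrite /lcomm !foldl_cat -/(lcomm w u) /=.
have yN := lcommN wN uG.
rewrite (swapc yN aG bG) -/(lcomm _ v) lcommV //.
by apply: NR => //; apply: NR.
Qed.

Lemma move_lem w u a m v : w \in N -> {subset u <= G} -> a \in G ->
  {subset m <= G} -> {subset v <= G} ->
  lcomm w (u ++ a :: m ++ v) = pw (odd (size m)) (lcomm w (u ++ m ++ a :: v)).
Proof.
elim: m u => [|c m IH] u wN uG aG mG vG //=.
have cG : c \in G by apply: mG; rewrite inE eqxx.
have mG' : {subset m <= G} by move=> z zs; apply: mG; rewrite inE zs orbT.
have vG' : {subset m ++ v <= G}.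
  by move=> z; rewrite mem_cat => /orP[]; [apply: mG' | apply: vG].
rewrite swap_adj // -(cat_rcons c u (a :: m ++ v)) IH //.
  by rewrite cat_rcons pwN.
by move=> z; rewrite mem_rcons inE => /orP[/eqP->|]; [|apply: uG].
Qed.

Lemma swap_gen w u a m b v : w \in N -> {subset u <= G} -> a \in G ->
  {subset m <= G} -> b \in G -> {subset v <= G} ->
  lcomm w (u ++ a :: m ++ b :: v) = (lcomm w (u ++ b :: m ++ a :: v))^-1.
Proof.
move=> wN uG aG mG bG vG.
have avG : {subset a :: v <= G} by move=> z; rewrite inE => /orP[/eqP->|]; [|apply: vG].
have bvG : {subset b :: v <= G} by move=> z; rewrite inE => /orP[/eqP->|]; [|apply: vG].
have umG : {subset u ++ m <= G}.
  by move=> z; rewrite mem_cat => /orP[]; [apply: uG | apply: mG].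
rewrite (move_lem wN uG aG mG bvG) (move_lem wN uG bG mG avG) !catA.
by rewrite swap_adj // pwV.
Qed.


Lemma dec (S : seq gT) d i j : i < j -> j < size S ->
  S = take i S ++ nth d S i :: take (j - i.+1) (drop i.+1 S) ++ nth d S j :: drop j.+1 S.
Proof.
move=> ij jS.
have iS : i < size S by apply: ltn_trans ij jS.
rewrite -{1}(cat_take_drop i S) (drop_nth d iS); congr (_ ++ _ :: _).
rewrite -{1}(cat_take_drop (j - i.+1) (drop i.+1 S)) drop_drop subnK //.
by rewrite (drop_nth d jS).
Qed.

Lemma Lswap w (L L' : seq gT) i j d : w \in N -> {subset L <= G} -> i < j ->
  j < size L -> size L' = size L ->
  (forall n, n < size L -> nth d L' n = nth d L (if n == i then j else if n == j then i else n)) ->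
  lcomm w L' = (lcomm w L)^-1.
Proof.
move=> wN LG ij jL sL hn.
have iL : i < size L by apply: ltn_trans ij jL.
rewrite (dec d ij jL) (dec d ij (_ : j < size L')); last by rewrite sL.
have e1 : take i L' = take i L.
  apply: (@eq_from_nth _ d); first by rewrite !size_take sL.
  move=> n; rewrite size_take sL iL => ni.
  rewrite !nth_take // hn; last by apply: ltn_trans ni iL.
  by rewrite (ltn_eqF ni) (ltn_eqF (ltn_trans ni ij)).
have e2 : take (j - i.+1) (drop i.+1 L') = take (j - i.+1) (drop i.+1 L).
  apply: (@eq_from_nth _ d); first by rewrite !size_take !size_drop sL.
  move=> n; rewrite size_take size_drop => nlt.
  have nj : n < j - i.+1.
    by move: nlt; case: ifP => hc h; lia.
  rewrite !nth_take // !nth_drop hn; last by lia.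
  have -> : (i.+1 + n == i) = false by lia.
  by have -> : (i.+1 + n == j) = false by lia.
have e3 : drop j.+1 L' = drop j.+1 L.
  apply: (@eq_from_nth _ d); first by rewrite !size_drop sL.
  move=> n; rewrite size_drop => nlt; rewrite !nth_drop hn; last by lia.
  have -> : (j.+1 + n == i) = false by lia.
  by have -> : (j.+1 + n == j) = false by lia.
rewrite e1 e2 e3 (hn _ iL) (hn _ jL) eqxx (gtn_eqF ij) eqxx.
apply: swap_gen => //.
- by move=> z /mem_take; apply: LG.
- by apply: LG; apply: mem_nth.
- by move=> z /mem_take /mem_drop; apply: LG.
- by apply: LG; apply: mem_nth.
- by move=> z /mem_drop; apply: LG.
Qed.


Lemma tperm_lem w k (h : 'I_k -> gT) (i j : 'I_k) : w \in N ->
  (forall l, h l \in G) -> i != j ->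
  lcomm w [seq h (tperm i j l) | l <- enum 'I_k] = (lcomm w [seq h l | l <- enum 'I_k])^-1.
Proof.
move=> wN hG; wlog ij : i j / i < j.
  move=> H; case: (ltngtP i j) => [ij|ji|eij] nij.
  - exact: H.
  - by rewrite tpermC; apply: H => //; rewrite eq_sym.
  - by move/eqP: nij; case; apply: val_inj.
move=> nij.
apply: (@Lswap w _ _ i j (h i)) => //.
- by move=> z /mapP[l _ ->].
- by rewrite size_map size_enum_ord.
- by rewrite !size_map.
move=> n; rewrite size_map size_enum_ord => nk.
have swk : (if n == i then nat_of_ord j else if n == j then nat_of_ord i else n) < k.
  by case: ifP => _; [|case: ifP => _]; rewrite ?ltn_ord.
rewrite (nth_map i) ?size_enum_ord // (nth_map i) ?size_enum_ord //.
set o := nth i (enum 'I_k) n.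
have vo : nat_of_ord o = n by rewrite nth_enum_ord.
congr h; apply: val_inj; rewrite /= nth_enum_ord // -vo.
case: (eqVneq o i) => [->|oi]; first by rewrite tpermL eqxx.
have -> : (nat_of_ord o == nat_of_ord i) = false by apply/negbTE.
case: (eqVneq o j) => [->|oj]; first by rewrite tpermR eqxx.
have -> : (nat_of_ord o == nat_of_ord j) = false by apply/negbTE.
by rewrite tpermD // eq_sym.
Qed.

Lemma perm_lem w k (s : {perm 'I_k}) : w \in N -> forall h : 'I_k -> gT,
  (forall l, h l \in G) ->
  lcomm w [seq h (s l) | l <- enum 'I_k] = pw (odd_perm s) (lcomm w [seq h l | l <- enum 'I_k]).
Proof.
move=> wN; case: (prod_tpermP s) => ts -> {s}.
elim: ts => [|t ts IH] /=.
  move=> _ h hG; rewrite big_nil odd_perm1 /=; congr lcomm.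
  by apply: eq_map => l; rewrite perm1.
case/andP=> dt dts h hG.
rewrite big_cons odd_permM odd_tperm.
have -> : [seq h ((tperm t.1 t.2 * \prod_(j <- ts) tperm j.1 j.2) l) | l <- enum 'I_k]
  = [seq (fun l => h ((\prod_(j <- ts) tperm j.1 j.2) l)) (tperm t.1 t.2 l) | l <- enum 'I_k].
  by apply: eq_map => l; rewrite permM.
rewrite (tperm_lem (h := fun l => h ((\prod_(j <- ts) tperm j.1 j.2) l)) (i := t.1) (j := t.2)) //.
by rewrite IH // dt /= pwN.
Qed.

End S.

Theorem lemma3p2 (gT : finGroupType) (G : {group gT}) (x : gT) (k : nat)
    (g : 'I_k -> gT) (sigma : 'S_k) :
  3.-group G -> semi3abelian G -> x \in 'Ohm_1(G) -> 0 < k ->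
  (forall i, g i \in G) ->
  lcomm x [seq g (sigma i) | i <- enum 'I_k]
  = lcomm x [seq g i | i <- enum 'I_k] ^+ (2 ^ odd_perm sigma).
Proof.
move=> pG sG xN k0 gG.
rewrite (perm_lem pG sG sigma xN gG).
set z := lcomm x _.
have zN : z \in 'Ohm_1(G).
  by apply: (lcommN xN) => u /mapP[l _ ->].
case: (odd_perm sigma); rewrite /pw /=; last by rewrite ?expg1.
rewrite expn1; apply: mulg1_eq; rewrite -expgS; exact: (N_exp pG sG).
Qed.
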